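(* For all odd integers $n\ge1$ and real numbers $a\ge1$, $x,y\in(0,\pi)$, we have $\Theta_{n,a}(x,y)\ge\sin(x)\sin(y)$. Equality holds if and only if $n=1$.
   Context: For a real number $a$ and integers $0\le m$, $\binom{m+a}{m}=\frac{(a+1)(a+2)\cdots(a+m)}{m!}$ (equal to $1$ when $m=0$). For an integer $n\ge1$, $\Theta_{n,a}(x,y)=\sum_{j=1}^n\binom{n+a-j}{n-j}\frac{\sin(jx)\sin(jy)}{j}$. *)

(* Defs.v *)
From Stdlib Require Import Reals Lra Lia Arith Factorial.
Open Scope R_scope.

Fixpoint rising_prod (a : R) (m : nat) : R :=
  match m with
  | O => 1
  | S k => rising_prod a k * (a + INR (S k))
  end.

(* generalized binomial  binom(m+a, m) = (a+1)...(a+m)/m!  (= 1 when m = 0) *)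
Definition gbinom (m : nat) (a : R) : R := rising_prod a m / INR (fact m).

(* Theta_{n,a}(x,y) = sum_{j=1}^n binom(n+a-j, n-j) sin(jx) sin(jy) / j *)
Definition Theta (n : nat) (a x y : R) : R :=
  sum_f_R0 (fun i => let j := S i in
    gbinom (n - j) a * (sin (INR j * x) * sin (INR j * y)) / INR j) (n - 1).

(* Main.v *)
Require Import Defs.
From Stdlib Require Import Reals Lra Lia Arith.
From Coquelicot Require Import Coquelicot.
Open Scope R_scope.

Fixpoint sm (f : nat -> R) (n : nat) : R :=
  match n with O => 0 | S k => sm f k + f k end.

Lemma sm_R0 f n : sum_f_R0 f n = sm f (S n).
Proof. induction n; simpl in *; [lra| rewrite IHn; reflexivity]. Qed.

Lemma sm_ext f g n : (forall i, (i < n)%nat -> f i = g i) -> sm f n = sm g n.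
Proof. induction n; intros H; simpl; [reflexivity|]. rewrite IHn by (intros; apply H; lia). rewrite H by lia. reflexivity. Qed.

Lemma sm_plus f g n : sm (fun i => f i + g i) n = sm f n + sm g n.
Proof. induction n; simpl; lra. Qed.
Lemma sm_minus f g n : sm (fun i => f i - g i) n = sm f n - sm g n.
Proof. induction n; simpl; lra. Qed.
Lemma sm_scal c f n : sm (fun i => c * f i) n = c * sm f n.
Proof. induction n; simpl; [ring|rewrite IHn; ring]. Qed.
Lemma sm_zero n : sm (fun _ => 0) n = 0.
Proof. induction n; simpl; lra. Qed.
Lemma sm_shift f n : sm f (S n) = f O + sm (fun k => f (S k)) n.
Proof. induction n; simpl in *; [ring| rewrite IHn; ring]. Qed.
Lemma sm_swap (f : nat -> nat -> R) n m :
  sm (fun i => sm (fun j => f i j) m) n = sm (fun j => sm (fun i => f i j) n) m.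
Proof.
  induction n; simpl.
  - rewrite sm_zero; reflexivity.
  - rewrite IHn, <- sm_plus. reflexivity.
Qed.
Lemma sm_nonneg f n : (forall i, (i < n)%nat -> 0 <= f i) -> 0 <= sm f n.
Proof. induction n; intros H; simpl; [lra|]. assert (0 <= f n) by (apply H; lia).
  assert (0 <= sm f n) by (apply IHn; intros; apply H; lia). lra. Qed.

Lemma sm_trunc (h : nat -> R) k n : (k < n)%nat ->
  sm (fun i => if (i <=? k)%nat then h i else 0) n = sm h (S k).
Proof.
  induction n; intros Hk; [lia|].
  destruct (Nat.eq_dec k n) as [->|Hne].
  - simpl. rewrite Nat.leb_refl.
    rewrite (sm_ext _ h). reflexivity. intros i Hi. 
    destruct (i <=? n)%nat eqn:E; [reflexivity| apply Nat.leb_gt in E; lia].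
  - simpl. rewrite IHn by lia. destruct (n <=? k)%nat eqn:E; [apply Nat.leb_le in E; lia|]. simpl. ring.
Qed.

Lemma rp_shift b m : rising_prod (b - 1) (S m) = b * rising_prod b m.
Proof.
  induction m; simpl in *. ring.
  rewrite IHm. destruct m; simpl; ring.
Qed.

Lemma gbinom0 b : gbinom 0 b = 1.
Proof. unfold gbinom; simpl. lra. Qed.

Lemma pascal m b : gbinom (S m) b = gbinom m b + gbinom (S m) (b - 1).
Proof.
  unfold gbinom. rewrite rp_shift. change (rising_prod b (S m)) with (rising_prod b m * (b + INR (S m))).
  rewrite fact_simpl, mult_INR.
  pose proof (INR_fact_lt_0 m). rewrite S_INR. assert (INR (fact m) <> 0) by lra. pose proof (pos_INR m).
  assert (INR m + 1 <> 0) by lra. field; auto.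
Qed.

Lemma gbinom_nonneg m b : -1 <= b -> 0 <= gbinom m b.
Proof.
  intros Hb. unfold gbinom. apply Rmult_le_pos; [|left; apply Rinv_0_lt_compat, INR_fact_lt_0].
  induction m; [simpl; lra|]. change (rising_prod b (S m)) with (rising_prod b m * (b + INR (S m))). apply Rmult_le_pos; auto. rewrite S_INR. pose proof (pos_INR m); lra.
Qed.

Lemma hockey b N i : (i < N)%nat ->
  sm (fun k => if (i <=? k)%nat then gbinom (N - S k) (b - 1) else 0) N = gbinom (N - S i) b.
Proof.
  revert i; induction N; intros i Hi; [lia|].
  rewrite sm_shift. destruct i as [|i'].
  - simpl (0 <=? 0)%nat. 
    destruct N as [|N'].
    + simpl. rewrite !gbinom0. ring.
    + rewrite (sm_ext _ (fun k => if (0 <=? k)%nat then gbinom (S N' - S k) (b - 1) else 0)).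
      2:{ intros k Hk. simpl. reflexivity. }
      rewrite IHN by lia. replace (S (S N') - 1)%nat with (S N') by lia.
      replace (S N' - 1)%nat with N' by lia. rewrite (pascal N' b). ring.
  - simpl ((S i' <=? 0)%nat).
    rewrite (sm_ext _ (fun k => if (i' <=? k)%nat then gbinom (N - S k) (b - 1) else 0)).
    2:{ intros k Hk. simpl. reflexivity. }
    rewrite IHN by lia. simpl. ring.
Qed.

Lemma conv (u : nat -> R) b N :
  sm (fun i => gbinom (N - S i) b * u i) N =
  sm (fun k => gbinom (N - S k) (b - 1) * sm u (S k)) N.
Proof.
  rewrite (sm_ext (fun k => gbinom (N - S k) (b - 1) * sm u (S k))
     (fun k => sm (fun i => if (i <=? k)%nat then gbinom (N - S k) (b - 1) * u i else 0) N)).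
  2:{ intros k Hk. rewrite <- sm_scal. rewrite <- (sm_trunc _ k N Hk).
      apply sm_ext. intros i _. destruct (i <=? k)%nat; ring. }
  rewrite sm_swap. apply sm_ext. intros i Hi.
  rewrite <- (hockey b N i Hi). rewrite Rmult_comm, <- sm_scal.
  apply sm_ext. intros k _. destruct (i <=? k)%nat; ring.
Qed.

Lemma sin_pm X t : sin (X + t) + sin (X - t) = 2 * cos t * sin X.
Proof. rewrite sin_plus, sin_minus. ring. Qed.

Lemma cD m t : 2 * (1 - cos t) * sm (fun i => sin (INR (S i) * t)) (S m)
   = sin t + sin (INR (S m) * t) - sin (INR (S (S m)) * t).
Proof.
  induction m.
  - simpl. replace (1 * t) with t by ring. replace ((1+1) * t) with (2 * t) by ring.
    rewrite sin_2a. ring.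
  - change (sm (fun i => sin (INR (S i) * t)) (S (S m))) with
      (sm (fun i => sin (INR (S i) * t)) (S m) + sin (INR (S (S m)) * t)).
    rewrite Rmult_plus_distr_l, IHm.
    pose proof (sin_pm (INR (S (S m)) * t) t) as H.
    replace (INR (S (S m)) * t + t) with (INR (S (S (S m))) * t) in H by (rewrite (S_INR (S (S m))); ring).
    replace (INR (S (S m)) * t - t) with (INR (S m) * t) in H by (rewrite (S_INR (S m)); ring).
    lra.
Qed.

Lemma cS1 k t : 2 * (1 - cos t) * sm (fun m => sm (fun i => sin (INR (S i) * t)) (S m)) (S k)
   = INR (S (S k)) * sin t - sin (INR (S (S k)) * t).
Proof.
  induction k.
  - change (sm (fun m => sm (fun i => sin (INR (S i) * t)) (S m)) 1) with
      (0 + (0 + sin (INR 1 * t))).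
    replace (INR 1 * t) with t by (simpl; ring). replace (INR 2 * t) with (2 * t) by (simpl; ring).
    rewrite sin_2a. simpl. ring.
  - change (sm (fun m => sm (fun i => sin (INR (S i) * t)) (S m)) (S (S k))) with
      (sm (fun m => sm (fun i => sin (INR (S i) * t)) (S m)) (S k) + sm (fun i => sin (INR (S i) * t)) (S (S k))).
    rewrite Rmult_plus_distr_l, IHk, cD. rewrite (S_INR (S (S k))). ring.
Qed.

Lemma sin_mul_le m t : 0 <= sin t -> Rabs (sin (INR m * t)) <= INR m * sin t.
Proof.
  intros Hs. induction m.
  - simpl. rewrite Rmult_0_l, sin_0, Rabs_R0. lra.
  - rewrite S_INR. replace ((INR m + 1) * t) with (INR m * t + t) by ring.
    rewrite sin_plus.
    pose proof (COS_bound t). pose proof (COS_bound (INR m * t)).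
    pose proof (Rabs_triang (sin (INR m * t) * cos t) (cos (INR m * t) * sin t)).
    rewrite !Rabs_mult in H1. rewrite (Rabs_pos_eq (sin t)) in H1 by lra.
    assert (Rabs (cos t) <= 1) by (apply Rabs_le; lra).
    assert (Rabs (cos (INR m * t)) <= 1) by (apply Rabs_le; lra).
    pose proof (Rabs_pos (sin (INR m * t))).
    nra.
Qed.

Lemma cos_lt1 t : 0 < t < PI -> cos t < 1.
Proof. intros. rewrite <- cos_0. apply cos_decreasing_1; lra. Qed.
Lemma cos_gtm1 t : 0 < t < PI -> -1 < cos t.
Proof. intros. rewrite <- cos_PI. apply cos_decreasing_1; lra. Qed.

Lemma sin_mul_lt m t : 0 < t < PI -> (2 <= m)%nat -> Rabs (sin (INR m * t)) < INR m * sin t.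
Proof.
  intros Ht Hm. pose proof (sin_gt_0 t (proj1 Ht) (proj2 Ht)) as Hs.
  induction m as [|m IH]; [lia|].
  destruct (Nat.eq_dec m 1) as [->|Hne].
  - replace (INR 2 * t) with (2 * t) by (simpl; ring). rewrite sin_2a.
    rewrite !Rabs_mult, (Rabs_pos_eq 2) by lra. rewrite (Rabs_pos_eq (sin t)) by lra.
    pose proof (cos_lt1 t Ht). pose proof (cos_gtm1 t Ht).
    assert (Rabs (cos t) < 1) by (apply Rabs_def1; lra). simpl. nra.
  - assert (IH' : Rabs (sin (INR m * t)) < INR m * sin t) by (apply IH; lia).
    rewrite S_INR. replace ((INR m + 1) * t) with (INR m * t + t) by ring.
    rewrite sin_plus.
    pose proof (COS_bound t). pose proof (COS_bound (INR m * t)).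
    pose proof (Rabs_triang (sin (INR m * t) * cos t) (cos (INR m * t) * sin t)).
    rewrite !Rabs_mult in H1. rewrite (Rabs_pos_eq (sin t)) in H1 by lra.
    assert (Rabs (cos t) <= 1) by (apply Rabs_le; lra).
    assert (Rabs (cos (INR m * t)) <= 1) by (apply Rabs_le; lra).
    pose proof (Rabs_pos (sin (INR m * t))).
    nra.
Qed.

Lemma Zlem k t : (1 <= k)%nat -> 0 < t < PI ->
  0 <= 2 * INR k * sin t + sin (2 * t) - sin (INR (2 * k + 2) * t) /\
  (2 * INR k * sin t + sin (2 * t) - sin (INR (2 * k + 2) * t) = 0 -> t = 2 * PI / 3).
Proof.
  intros Hk Ht. pose proof (sin_gt_0 t (proj1 Ht) (proj2 Ht)) as Hs.
  assert (E : sin (INR (2 * k + 2) * t) - sin (2 * t) = 2 * cos (INR (k+2) * t) * sin (INR k * t)).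
  { assert (H1 : INR (2 * k + 2) * t = INR (k+2) * t + INR k * t) by (rewrite !plus_INR, mult_INR; simpl; ring).
    assert (H2 : 2 * t = INR (k+2) * t - INR k * t) by (rewrite !plus_INR; simpl; ring).
    rewrite H1, H2, sin_plus, sin_minus. ring. }
  pose proof (sin_mul_le k t (Rlt_le _ _ Hs)) as Hle.
  pose proof (COS_bound (INR (k+2) * t)).
  assert (Hc : Rabs (cos (INR (k+2) * t)) <= 1) by (apply Rabs_le; lra).
  assert (Hb : cos (INR (k+2) * t) * sin (INR k * t) <= Rabs (sin (INR k * t))).
  { pose proof (Rle_abs (cos (INR (k+2) * t) * sin (INR k * t))). rewrite Rabs_mult in H0.
    pose proof (Rabs_pos (sin (INR k * t))). nra. }
  split; [nra|].
  intros H0.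
  destruct (Nat.eq_dec k 1) as [->|Hne].
  2:{ exfalso. pose proof (sin_mul_lt k t Ht ltac:(lia)). nra. }
  assert (Hc3 : cos (3 * t) = 1).
  { replace (INR (1 + 2) * t) with (3 * t) in * by (simpl; ring).
    replace (INR 1 * t) with t in * by (simpl; ring). simpl (INR 1) in *.
    assert (sin t * (1 - cos (3 * t)) = 0) by nra.
    apply Rmult_integral in H1. destruct H1; lra. }
  assert (Hz : sin (3 * t / 2) = 0).
  { pose proof (cos_2a_sin (3 * t / 2)). replace (2 * (3 * t / 2)) with (3 * t) in H1 by field.
    nra. }
  destruct (Rtotal_order (3 * t / 2) PI) as [Hl|[He|Hg]].
  - pose proof (sin_gt_0 (3 * t / 2) ltac:(lra) Hl). lra.
  - lra.
  - pose proof (sin_lt_0 (3 * t / 2) Hg ltac:(lra)). lra.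
Qed.

Definition Cs N (cf : nat -> R) t := sm (fun i => cf i * cos (INR (S i) * t) / INR (S i)) N.
Definition Ss N (cf : nat -> R) t := sm (fun i => cf i * sin (INR (S i) * t)) N.
Definition Th N (cf : nat -> R) x y :=
  sm (fun i => cf i * (sin (INR (S i) * x) * sin (INR (S i) * y)) / INR (S i)) N.

Lemma Cs_deriv N cf t : derivable_pt_lim (Cs N cf) t (- Ss N cf t).
Proof.
  induction N.
  - unfold Cs, Ss; simpl. rewrite Ropp_0. apply derivable_pt_lim_const.
  - change (Cs (S N) cf) with (plus_fct (Cs N cf) (fun t => cf N * cos (INR (S N) * t) / INR (S N))).
    change (Ss (S N) cf t) with (Ss N cf t + cf N * sin (INR (S N) * t)).
    replace (- (Ss N cf t + cf N * sin (INR (S N) * t))) with (- Ss N cf t + - (cf N * sin (INR (S N) * t))) by ring.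
    apply derivable_pt_lim_plus; [exact IHN|].
    assert (INR (S N) <> 0) by (apply not_0_INR; lia).
    apply is_derive_Reals.
    revert H. generalize (INR (S N)). intros k Hk. auto_derive; [auto|]. field. auto.
Qed.

Lemma Cs_mvt N cf p q : p < q -> exists c, p < c < q /\ Cs N cf p - Cs N cf q = (q - p) * Ss N cf c.
Proof.
  intros Hpq. destruct (MVT_cor2 (Cs N cf) (fun t => - Ss N cf t) p q Hpq) as [c [Hc1 Hc2]].
  { intros; apply Cs_deriv. }
  exists c. split; [auto|]. lra.
Qed.

Lemma Cs_neg N cf t : Cs N cf (- t) = Cs N cf t.
Proof. unfold Cs. apply sm_ext. intros. replace (INR (S i) * - t) with (- (INR (S i) * t)) by ring.
  rewrite cos_neg. reflexivity. Qed.

Lemma Cs_2pi N cf t : Cs N cf (2 * PI - t) = Cs N cf t.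
Proof. unfold Cs. apply sm_ext. intros.
  replace (INR (S i) * (2 * PI - t)) with (- (INR (S i) * t) + 2 * INR (S i) * PI) by ring.
  rewrite cos_period, cos_neg. reflexivity. Qed.

Lemma Th_Cs N cf x y : Th N cf x y = (Cs N cf (x - y) - Cs N cf (x + y)) / 2.
Proof.
  unfold Th, Cs. rewrite <- sm_minus. match goal with |- _ = ?A / 2 => replace (A / 2) with (/ 2 * A) by field end. rewrite <- sm_scal.
  apply sm_ext. intros i _.
  assert (INR (S i) <> 0) by (apply not_0_INR; lia).
  replace (INR (S i) * (x - y)) with (INR (S i) * x - INR (S i) * y) by ring.
  replace (INR (S i) * (x + y)) with (INR (S i) * x + INR (S i) * y) by ring.
  rewrite cos_minus, cos_plus. field. auto.
Qed.

Lemma Th_core N cf x y : 0 < x < PI -> 0 < y < PI ->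
  exists u w, 0 <= u < w /\ w <= PI /\ Th N cf x y = (Cs N cf u - Cs N cf w) / 2.
Proof.
  intros Hx Hy. rewrite Th_Cs.
  exists (Rabs (x - y)).
  destruct (Rle_dec (x + y) PI).
  - exists (x + y). split; [split; [apply Rabs_pos|]|split; [lra|]].
    + apply Rabs_def1; lra.
    + unfold Rabs; destruct (Rcase_abs (x - y)); [rewrite Cs_neg|]; reflexivity.
  - exists (2 * PI - (x + y)). split; [split; [apply Rabs_pos|]|split; [lra|]].
    + apply Rabs_def1; lra.
    + rewrite Cs_2pi. unfold Rabs; destruct (Rcase_abs (x - y)); [rewrite Cs_neg|]; reflexivity.
Qed.

Lemma Th_pos N cf x y :
  (forall t, 0 < t < PI -> 0 <= Ss N cf t) ->
  (forall t1 t2, 0 < t1 < PI -> 0 < t2 < PI -> Ss N cf t1 = 0 -> Ss N cf t2 = 0 -> t1 = t2) ->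
  0 < x < PI -> 0 < y < PI -> 0 < Th N cf x y.
Proof.
  intros Hnn Hz Hx Hy. destruct (Th_core N cf x y Hx Hy) as [u [w [Huw [Hw ->]]]].
  set (m := (u + w) / 2).
  destruct (Cs_mvt N cf u m ltac:(unfold m; lra)) as [c1 [Hc1 E1]].
  destruct (Cs_mvt N cf m w ltac:(unfold m; lra)) as [c2 [Hc2 E2]].
  assert (h1 : 0 < c1 < PI) by (unfold m in *; lra).
  assert (h2 : 0 < c2 < PI) by (unfold m in *; lra).
  pose proof (Hnn c1 h1). pose proof (Hnn c2 h2).
  assert (0 < m - u) by (unfold m; lra). assert (0 < w - m) by (unfold m; lra).
  destruct (Req_dec (Ss N cf c1) 0) as [z1|z1].
  - destruct (Req_dec (Ss N cf c2) 0) as [z2|z2].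
    + pose proof (Hz c1 c2 h1 h2 z1 z2). lra.
    + assert (0 < Ss N cf c2) by lra. nra.
  - assert (0 < Ss N cf c1) by lra. nra.
Qed.

Lemma sm_delta h n : sm (fun i => if (i =? 0)%nat then h i else 0) (S n) = h O.
Proof. rewrite sm_shift. simpl. rewrite sm_zero. ring. Qed.

Lemma sm_last f m : sm f (S m) = sm f m + f m.
Proof. reflexivity. Qed.

Lemma S1_nonneg m t : 0 < t < PI -> 0 <= sm (fun m => sm (fun i => sin (INR (S i) * t)) (S m)) (S m).
Proof.
  intros Ht. pose proof (cS1 m t). pose proof (cos_lt1 t Ht).
  pose proof (sin_gt_0 t (proj1 Ht) (proj2 Ht)).
  pose proof (sin_mul_le (S (S m)) t ltac:(lra)).
  pose proof (Rle_abs (sin (INR (S (S m)) * t))).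
  nra.
Qed.

Lemma Ss_facts k a t : (1 <= k)%nat -> 1 <= a -> 0 < t < PI ->
  let n := (2 * k + 1)%nat in
  let cf := fun i => gbinom (n - S i) a - (if (i =? 0)%nat then 1 else 0) in
  0 <= Ss n cf t /\ (Ss n cf t = 0 -> t = 2 * PI / 3).
Proof.
  intros Hk Ha Ht n cf.
  set (u := fun i => sin (INR (S i) * t)).
  assert (E1 : Ss n cf t = sm (fun i => gbinom (n - S i) a * u i) n - sin t).
  { unfold Ss, cf, u. 
    assert (D : sin t = sm (fun i => if (i =? 0)%nat then sin (INR (S i) * t) else 0) n).
    { replace n with (S (2 * k)) by (unfold n; lia). rewrite sm_delta. simpl. f_equal; ring. }
    rewrite D. rewrite <- sm_minus. apply sm_ext.
    intros i _. destruct (i =? 0)%nat; ring. }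
  rewrite conv, (conv (fun k0 => sm u (S k0))) in E1.
  replace n with (S (2 * k)) in E1 by (unfold n; lia).
  rewrite sm_last in E1. rewrite Nat.sub_diag, gbinom0 in E1.
  set (R0 := sm _ (2 * k)) in E1.
  assert (HR : 0 <= R0).
  { apply sm_nonneg. intros i _. apply Rmult_le_pos; [apply gbinom_nonneg; lra|].
    apply S1_nonneg; auto. }
  pose proof (cS1 (2 * k) t) as C.
  fold u in C.
  pose proof (Zlem k t Hk Ht) as [Z1 Z2].
  replace (INR (S (S (2 * k)))) with (INR (2 * k + 2)) in C by (f_equal; lia).
  pose proof (cos_lt1 t Ht).
  assert (Hsa : sin (2 * t) = 2 * sin t * cos t) by apply sin_2a.
  rewrite plus_INR, mult_INR in C, Z1, Z2. simpl (INR 2) in *. replace (1+1) with 2 in * by ring.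
  replace n with (S (2 * k)) by (unfold n; lia).
  set (Q := sm (fun m => sm u (S m)) (S (2 * k))) in *.
  assert (HQ : 2 * (1 - cos t) * (Q - sin t) = 2 * INR k * sin t + sin (2 * t) - sin ((2 * INR k + 2) * t)) by (rewrite Rmult_minus_distr_l, C; nra).
  assert (0 <= Q - sin t).
  { destruct (Rle_dec 0 (Q - sin t)); auto. nra. }
  split; [lra|].
  intros Hz0. apply Z2. assert (Hq0 : Q - sin t = 0) by lra. rewrite <- HQ. rewrite Hq0. ring.
Qed.

Theorem theorem3p7 (n : nat) (a x y : R) :
  (1 <= n)%nat -> Nat.Odd n -> 1 <= a -> 0 < x < PI -> 0 < y < PI ->
  sin x * sin y <= Theta n a x y /\
  (Theta n a x y = sin x * sin y <-> n = 1%nat).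
Proof.
  intros Hn [k Hk] Ha Hx Hy.
  destruct (Nat.eq_dec k 0) as [->|Hk0].
  - simpl in Hk. subst n.
    assert (E : Theta 1 a x y = sin x * sin y).
    { unfold Theta. simpl sum_f_R0. replace (1 - 1)%nat with 0%nat by lia. rewrite gbinom0.
      replace (INR 1) with 1 by reflexivity. rewrite !Rmult_1_l. field. }
    rewrite E. split; [lra|]. split; auto.
  - subst n. set (cf := fun i => gbinom ((2*k+1)%nat - S i) a - (if (i =? 0)%nat then 1 else 0)).
    assert (Hth : Th (2*k+1) cf x y = Theta (2*k+1) a x y - sin x * sin y).
    { unfold Theta. rewrite sm_R0. replace (S (2*k+1 - 1)) with (2*k+1)%nat by lia.
      unfold Th, cf.
      assert (D : sin x * sin y = sm (fun i => if (i =? 0)%nat then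
                 sin (INR (S i) * x) * sin (INR (S i) * y) / INR (S i) else 0) (2*k+1)).
      { replace (2*k+1)%nat with (S (2 * k)) by lia. rewrite sm_delta. simpl. rewrite !Rmult_1_l. field. }
      rewrite D, <- sm_minus. apply sm_ext. intros i _. destruct (i =? 0)%nat; field; apply not_0_INR; lia. }
    assert (Hpos : 0 < Th (2*k+1) cf x y).
    { apply Th_pos; auto.
      - intros t Ht. pose proof (Ss_facts k a t ltac:(lia) Ha Ht) as [F1 F2].
        exact F1.
      - intros t1 t2 H1 H2 Z1 Z2.
        pose proof (Ss_facts k a t1 ltac:(lia) Ha H1) as [_ F1].
        pose proof (Ss_facts k a t2 ltac:(lia) Ha H2) as [_ F2].
        rewrite (F1 Z1), (F2 Z2). reflexivity. }
    split; [lra|]. split; intros; [lra| lia].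
Qed.
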